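(* For every integer $k\ge0$ the formal power series $\psi_k(x):=-x^{2k}-\sum_{i\ge k}{i\brack k}x^{2i+1}$ is symplectic, and for $k\ge1$ it equals $\frac{1}{(2k-1)!}\sum_{i\ge1}(-1)^{i-1}E_{i-1}^{(2k-1)}(0)\,x^i$, where $E^{(2k-1)}$ denotes the $(2k-1)$-st derivative.
   Context: A formal power series $\varphi(x)=\sum_{i\ge0}\gamma_i x^i$ is called symplectic if for every $m\ge1$ one has $\sum_{k=0}^{m-1}(-1)^k\binom{m-1}{k}\gamma_{m+k}=0$. The Euler polynomials $E_n(x)$ are defined by $\frac{2e^{xt}}{e^t+1}=\sum_{n\ge0}E_n(x)\frac{t^n}{n!}$. For $n\ge0$ the integers ${n\brack i}$ are defined by $x\big(x^{2n}-E_{2n}(x)\big)=\sum_i {n\brack i}x^{2i}$; thus ${n\brack i}=0$ for $i\le0$ or $i>n$. *)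

(* Defs.v *)
From mathcomp Require Import all_boot all_order all_algebra.
Set Implicit Arguments. Unset Strict Implicit. Unset Printing Implicit Defensive.
Import Order.TTheory GRing.Theory Num.Theory.
Local Open Scope ring_scope.

Definition fps := nat -> rat.

Definition symplectic (g : fps) : Prop :=
  forall m : nat, (1 <= m)%N ->
    \sum_(k < m) (-1) ^+ k * ('C(m.-1, k))%:R * g (m + k)%N = 0.

(* The generating function identity
   2 e^{xt} / (e^t + 1) = sum_n E_n(x) t^n/n!,  i.e.  (e^t + 1) * E(x,t) = 2 e^{xt},
   is, coefficientwise in t^n/n!,
     E_n(x) + sum_{k=0}^n C(n,k) E_k(x) = 2 x^n,
   i.e.  E_n(x) = x^n - 1/2 * sum_{k<n} C(n,k) E_k(x).
   euler_seq n = [:: E_0; ...; E_n]. *)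
Fixpoint euler_seq (n : nat) : seq {poly rat} :=
  match n with
  | 0 => [:: 1]
  | n'.+1 =>
      let s := euler_seq n' in
      rcons s ('X^(n'.+1) - 2^-1 *: \sum_(k < n'.+1) ('C(n'.+1, k))%:R *: s`_k)
  end.

Definition euler_poly (n : nat) : {poly rat} := (euler_seq n)`_n.

Definition bracket (n i : nat) : rat :=
  ('X * ('X^(2 * n) - euler_poly (2 * n)))`_(2 * i).

Definition psi (k : nat) : fps := fun j =>
  - (if j == (2 * k)%N then 1 else 0)
  - (if odd j && (k <= j./2)%N then bracket j./2 k else 0).

Definition psi_euler (k : nat) : fps := fun j =>
  match j with
  | 0 => 0
  | i'.+1 => ((2 * k).-1`!)%:R^-1 * ((-1) ^+ i' * ((euler_poly i')^`((2 * k).-1)).[0])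
  end.

(* Main.v *)
From HB Require Import structures.
Require Import Defs.
From mathcomp Require Import all_boot all_order all_algebra ring.
Set Implicit Arguments. Unset Strict Implicit. Unset Printing Implicit Defensive.
Import Order.TTheory GRing.Theory Num.Theory.
Local Open Scope ring_scope.

Notation E := euler_poly.

Lemma size_euler_seq n : size (euler_seq n) = n.+1.
Proof. by elim: n => [|n IH] //=; rewrite size_rcons IH. Qed.

Lemma euler_seq_nth n k : (k <= n)%N -> (euler_seq n)`_k = E k.
Proof.
elim: n k => [|n IH] k; first by rewrite leqn0 => /eqP ->.
rewrite leq_eqVlt => /orP[/eqP ->|]; first by [].
rewrite ltnS => kn; rewrite /= nth_rcons size_euler_seq ltnS kn; exact: IH.
Qed.

Lemma E0 : E 0 = 1. Proof. by []. Qed.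

Lemma ES n : E n.+1 = 'X^(n.+1) - 2^-1 *: \sum_(k < n.+1) ('C(n.+1, k))%:R *: E k.
Proof.
rewrite /E /= nth_rcons size_euler_seq ltnn eqxx; congr (_ - _ *: _).
apply: eq_bigr => i _; rewrite euler_seq_nth //; by rewrite -ltnS.
Qed.

Lemma E_rec n : E n + \sum_(k < n.+1) ('C(n, k))%:R *: E k = 2%:R *: 'X^n.
Proof.
case: n => [|n]; first by rewrite big_ord1 E0 bin0 scale1r expr0 scaler_nat.
rewrite big_ord_recr /= binn scale1r addrCA -mulr2n -scaler_nat ES.
rewrite scalerBr scalerA mulfV // scale1r; by rewrite addrC subrK.
Qed.

Lemma E_coef_high n j : (n < j)%N -> (E n)`_j = 0.
Proof.
elim/ltn_ind: n j => n IH j nj.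
case: n IH nj => [|n] IH nj; first by rewrite E0 coefC; case: j nj.
rewrite ES coefB coefXn gtn_eqF // coefZ coef_sum big1 ?mulr0 ?subr0 //.
move=> i _; rewrite coefZ IH ?mulr0 //; exact: ltn_trans (ltn_ord i) nj.
Qed.
Definition Lf (Q : {poly rat}) : {poly rat} := \sum_(i < size Q) Q`_i *: E i.

Lemma Lf_widen (Q : {poly rat}) N : (size Q <= N)%N -> Lf Q = \sum_(i < N) Q`_i *: E i.
Proof.
move=> hN; rewrite /Lf (big_ord_widen N (fun i => Q`_i *: E i)) // big_mkcond.
apply: eq_bigr => i _; case: ifP => // /negbT; rewrite -leqNgt => h.
by rewrite nth_default // scale0r.
Qed.

Lemma Lf_is_linear : linear Lf.
Proof.
move=> a P Q.
set R := a *: P + Q.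
set N := (size R + size P + size Q)%N.
rewrite (@Lf_widen R N) ?(@Lf_widen P N) ?(@Lf_widen Q N); first last.
- by rewrite /N -addnA leq_addr.
- by rewrite /N addnAC leq_addl.
- by rewrite leq_addl.
rewrite /R (scaler_sumr a) -big_split /=; apply: eq_bigr => i _.
by rewrite coefD coefZ scalerDl scalerA.
Qed.

HB.instance Definition _ :=
  GRing.isLinear.Build rat {poly rat} {poly rat} *:%R Lf Lf_is_linear.

Lemma Lf_Xn n : Lf 'X^n = E n.
Proof.
rewrite /Lf size_polyXn big_ord_recr /= coefXn eqxx scale1r big1 ?add0r //.
by move=> i _; rewrite coefXn ltn_eqF // scale0r.
Qed.

Lemma Lf_X1n n : Lf (('X + 1) ^+ n) = 2%:R *: 'X^n - E n.
Proof.
rewrite -E_rec addrAC subrr add0r exprD1n linear_sum /=; apply: eq_bigr => i _.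
by rewrite raddfMn /= Lf_Xn scaler_nat.
Qed.

Lemma Lf_shift (Q : {poly rat}) : Lf (Q + (Q \Po ('X + 1))) = 2%:R *: Q.
Proof.
rewrite linearD /= comp_polyE linear_sum /= {1}/Lf.
under eq_bigr do rewrite linearZ /= Lf_X1n.
rewrite -big_split /= -[in RHS](coefK Q) poly_def (scaler_sumr 2%:R).
apply: eq_bigr => i _.
by rewrite scalerBr addrC subrK !scalerA mulrC.
Qed.

Lemma size_shift_sub (Q : {poly rat}) : Q != 0 ->
  (size (Q \Po ('X + 1) - Q)%R < size Q)%N.
Proof.
move=> Qn0.
have hs : size ('X + 1 : {poly rat}) = 2 by rewrite -polyC1 size_XaddC.
have sz : size (Q \Po ('X + 1)) = size Q by rewrite size_comp_poly2.
have lc : lead_coef (Q \Po ('X + 1)) = lead_coef Q.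
  by rewrite lead_coef_comp ?hs // -polyC1 lead_coefXaddC expr1n mulr1.
have pos : (0 < size Q)%N by rewrite size_poly_gt0.
rewrite -(prednK pos) ltnS; apply/leq_sizeP => j hj.
rewrite coefB; move: hj; rewrite leq_eqVlt => /orP[/eqP <-|hj].
  by move: lc; rewrite !lead_coefE sz => ->; rewrite subrr.
rewrite !nth_default ?subrr //; first by rewrite -(prednK pos).
by rewrite sz -(prednK pos).
Qed.

Lemma comp_X1_NX1 : ('X + 1 : {poly rat}) \Po (- 'X - 1) = - 'X.
Proof. by rewrite comp_polyD comp_polyX -polyC1 comp_polyC polyC1 subrK. Qed.

Lemma comp_NX_X1 : (- 'X : {poly rat}) \Po ('X + 1) = - 'X - 1.
Proof. by rewrite linearN /= comp_polyX opprD. Qed.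

Lemma Lf_refl (Q : {poly rat}) : Lf Q \Po (- 'X) = Lf (Q \Po (- 'X - 1)).
Proof.
have key : forall P : {poly rat},
    Lf (P + (P \Po ('X + 1))) \Po (- 'X) =
    Lf ((P + (P \Po ('X + 1))) \Po (- 'X - 1)).
  move=> P; rewrite Lf_shift comp_polyZ comp_polyD -comp_polyA comp_X1_NX1.
  set R := P \Po (- 'X).
  have -> : P \Po (- 'X - 1) = R \Po ('X + 1) by rewrite /R -comp_polyA comp_NX_X1.
  by rewrite addrC Lf_shift.
move: {2}(size Q) (erefl (size Q)) => n; elim/ltn_ind: n Q => n IHn Q hn.
have IH : forall P : {poly rat}, (size P < size Q)%N ->
    Lf P \Po (- 'X) = Lf (P \Po (- 'X - 1)).
  by move=> P hP; apply: (IHn (size P)); rewrite // -hn.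
have [->|Qn0] := eqVneq Q 0.
  by rewrite comp_poly0 raddf0 comp_poly0.
have h1 := IH _ (size_shift_sub Qn0).
have h2 := key Q.
move: h1 h2; rewrite !(linearB, linearD) /=.
set a := Lf Q \Po _; set b := Lf (Q \Po _) \Po _.
set c := Lf (Q \Po (- 'X - 1)); set d := Lf ((Q \Po _) \Po _).
move=> h1 h2.
have : (a - c) *+ 2 = 0.
  have -> : (a - c) *+ 2 = (a + b - (c + d)) - ((b - a) - (d - c)) by ring.
  by rewrite h1 h2 !subrr.
move=> h; apply/eqP; rewrite -subr_eq0.
have := congr1 (fun p => (2 : rat)^-1 *: p) h.
by rewrite /= -scaler_nat scalerA mulVf // scale1r scaler0 => ->.
Qed.

Lemma coef_compNX (P : {poly rat}) r : (P \Po (- 'X))`_r = (-1) ^+ r * P`_r.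
Proof.
rewrite comp_polyE.
have -> : \sum_(i < size P) P`_i *: (- 'X) ^+ i
        = \sum_(i < size P) (P`_i * (-1) ^+ i) *: 'X^i.
  apply: eq_bigr => i _.
  by rewrite -scalerA -[- 'X]scaleN1r exprZn.
rewrite -(poly_def (size P) (fun i => P`_i * (-1) ^+ i)) coef_poly; case: ifP => h; first by rewrite mulrC.
by rewrite nth_default ?mulr0 // leqNgt h.
Qed.

Lemma Lf_even (Q : {poly rat}) r :
  Q \Po (- 'X - 1) = Q -> odd r -> (Lf Q)`_r = 0.
Proof.
move=> hQ hr.
have := congr1 (fun p : {poly rat} => p`_r) (Lf_refl Q).
rewrite /= coef_compNX hQ -signr_odd hr expr1 mulN1r => h.
have : (Lf Q)`_r *+ 2 = 0 by rewrite mulr2n -{1}h addNr.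
by move/eqP; rewrite mulrn_eq0 /= => /eqP.
Qed.

Lemma comp_polyX_exp (r q : {poly rat}) n : (r ^+ n) \Po q = (r \Po q) ^+ n.
Proof.
elim: n => [|n IH]; first by rewrite !expr0 -polyC1 comp_polyC.
by rewrite !exprS comp_polyM IH.
Qed.

Lemma Qp_sym p : ('X^p * ('X + 1) ^+ p : {poly rat}) \Po (- 'X - 1)
               = 'X^p * ('X + 1) ^+ p.
Proof.
rewrite comp_polyM !comp_polyX_exp comp_X1_NX1 comp_polyX -!exprMn.
congr (_ ^+ _); ring.
Qed.

Lemma Lf_Qp p : Lf ('X^p * ('X + 1) ^+ p) = \sum_(j < p.+1) 'C(p, j)%:R *: E (p + j).
Proof.
rewrite exprD1n mulr_sumr linear_sum /=; apply: eq_bigr => j _.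
by rewrite mulrnAr -exprD raddfMn /= Lf_Xn scaler_nat.
Qed.

Lemma sum_E_odd p r : odd r ->
  \sum_(j < p.+1) 'C(p, j)%:R * (E (p + j))`_r = 0.
Proof.
move=> hr; have := Lf_even (Qp_sym p) hr.
by rewrite Lf_Qp coef_sum; under eq_bigr do rewrite coefZ.
Qed.

Lemma E_odd_coef n r : odd n -> odd r -> (E n)`_r = (r == n)%:R.
Proof.
move=> hn hr.
have := congr1 (fun p : {poly rat} => p`_r) (Lf_refl 'X^n).
have e : (- 'X - 1 : {poly rat}) = - ('X + 1) by rewrite opprD.
rewrite /= Lf_Xn coef_compNX (comp_polyX_exp 'X) comp_polyX e.
rewrite -signr_odd hr expr1 mulN1r exprNn -signr_odd hn expr1 mulN1r linearN /= Lf_X1n.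
rewrite coefN coefB coefZ coefXn => /oppr_inj h.
have : 2%:R * (E n)`_r = 2%:R * (r == n)%:R by rewrite mulr_natl mulr2n {1}h subrK.
by move/(mulfI _); apply.
Qed.

Lemma odd_pred2 k : (0 < k)%N -> odd (2 * k).-1.
Proof. by case: k => // k _; rewrite mulnS /= mul2n odd_double. Qed.

Lemma pe_eq k j : psi_euler k j.+1 = (-1) ^+ j * (E j)`_((2 * k).-1).
Proof.
rewrite /psi_euler horner_coef0 coef_derivn addn0 ffactnn -mulr_natr.
set c := (E j)`_ _; set f := ((2 * k).-1)`!%:R.
have hf : f != 0 :> rat by rewrite /f pnatr_eq0 -lt0n fact_gt0.
by rewrite mul1r -mulr_natr -/f mulrCA [f^-1 * _]mulrCA mulVf // mulr1.
Qed.

Lemma bracket_eq a k : (1 <= k)%N -> bracket a k = - (E (2 * a))`_((2 * k).-1).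
Proof.
move=> hk; rewrite /bracket coefXM muln_eq0 /= eqn0Ngt hk /= coefB coefXn.
have -> : ((2 * k).-1 == 2 * a)%N = false.
  apply/negbTE/negP => /eqP h; have := congr1 odd h.
  by rewrite odd_pred2 // mul2n odd_double.
by rewrite /= sub0r.
Qed.

Lemma part2 k : (1 <= k)%N -> forall j, psi k j = psi_euler k j.
Proof.
move=> hk [|i].
  by rewrite /psi /= eq_sym muln_eq0 /= eqn0Ngt hk /= !subr0 oppr0.
rewrite pe_eq /psi.
set r := (2 * k).-1.
have hr : odd r.
  exact: odd_pred2.
have h2k : (2 * k)%N = r.+1 by rewrite /r prednK // muln_gt0.
case hi : (odd i).
  rewrite /= hi /= subr0 E_odd_coef // -signr_odd hi expr1 mulN1r h2k eqSS eq_sym.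
  by case: (r == i).
rewrite /= hi /= h2k eqSS.
have hri : (r == i) = false by apply/negbTE/negP => /eqP hh; move: hr; rewrite hh hi.
rewrite eq_sym hri /= -signr_odd hi expr0 mul1r oppr0 sub0r uphalf_half hi add0n.
have ei : i = (2 * i./2)%N by rewrite mul2n even_halfK ?hi.
case: leqP => hka.
  by rewrite bracket_eq // opprK -ei.
rewrite oppr0 E_coef_high //.
by rewrite {1}ei /r -ltnS prednK ?muln_gt0 // !mul2n -doubleS leq_double.
Qed.

Theorem lemma5p3 (k : nat) :
  symplectic (psi k) /\ ((1 <= k)%N -> forall j : nat, psi k j = psi_euler k j).
Proof.
split; last exact: part2.
move=> [|p] // _.
case: k => [|k].
  rewrite big1 // => j _.
  rewrite /psi /bracket muln0 coefXM /=.
  by case: ifP => _; rewrite oppr0 subr0 mulr0.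
have hk : (1 <= k.+1)%N by [].
set r := (2 * k.+1).-1.
have hr : odd r.
  exact: odd_pred2.
apply: (@eq_trans _ _ ((-1) ^+ p * \sum_(j < p.+1) 'C(p, j)%:R * (E (p + j))`_r)); last first.
  by rewrite sum_E_odd // mulr0.
rewrite mulr_sumr; apply: eq_bigr => j _.
rewrite addSn part2 // pe_eq -/r.
have e : (-1) ^+ j * (-1) ^+ (p + j) = (-1) ^+ p :> rat.
  by rewrite -exprD -signr_odd addnCA oddD addnn odd_double addbF signr_odd.
by rewrite -e /=; ring.
Qed.
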